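(* Let $X$ be a Hausdorff space. Then every compact subset of $X$ is finite (i.e. $\mathcal{K}(X)=\mathcal{F}(X)$) if and only if every compact subset of $\mathcal{K}(X)$ is finite (i.e. $\mathcal{K}(\mathcal{K}(X))=\mathcal{F}(\mathcal{K}(X))$).
   Context: $\mathcal{K}(X)$ is the set of nonempty compact subsets of $X$ with the Vietoris topology (generated by $U^+=\{A: A\subset U\}$ and $U^-=\{A: A\cap U\neq\emptyset\}$ for $U$ open in $X$); $\mathcal{F}(X)$ is its subset of nonempty finite sets. *)

(* Defs.v *)
From HB Require Import structures.
From mathcomp Require Import all_boot all_order.
From mathcomp Require Import boolp classical_sets functions cardinality.
From mathcomp Require Import topology.
Set Implicit Arguments. Unset Strict Implicit. Unset Printing Implicit Defensive.
Local Open Scope classical_set_scope.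

Record hyperspace (X : topologicalType) := Hyp {
  hyp_set :> set X;
  hyp_nonempty : hyp_set !=set0;
  hyp_compact : compact hyp_set }.

HB.instance Definition _ (X : topologicalType) := gen_eqMixin (hyperspace X).
HB.instance Definition _ (X : topologicalType) := gen_choiceMixin (hyperspace X).

(** Subbasic Vietoris sets: index (true, U) gives U^+ = [set A | A `<=` U],
    index (false, U) gives U^- = [set A | A `&` U !=set0], for U open. *)
Definition vietoris_sub (X : topologicalType) (i : bool * set X) : set (hyperspace X) :=
  if i.1 then [set A : hyperspace X | (A : set X) `<=` i.2]
  else [set A : hyperspace X | (A : set X) `&` i.2 !=set0].

Definition vietoris_index (X : topologicalType) : set (bool * set X) :=
  [set i | open i.2].

HB.instance Definition _ (X : topologicalType) :=
  isSubBaseTopological.Build (hyperspace X) (@vietoris_index X) (@vietoris_sub X).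

(* Main.v *)
Require Import Defs.
From HB Require Import structures.
From mathcomp Require Import all_boot all_order.
From mathcomp Require Import boolp classical_sets functions cardinality.
From mathcomp Require Import topology.
From mathcomp Require Import finmap.
Local Open Scope classical_set_scope.

Section P.
Variables (T : topologicalType) (t0 : T).
Definition PT : Type := T.
HB.instance Definition _ := Topological.on PT.
HB.instance Definition _ := isPointed.Build PT t0.
Lemma cc_aux (A : set T) : compact A <-> cover_compact A.
Proof. have := @compact_cover PT. move=> E.
change (@compact PT A <-> @cover_compact PT A). by rewrite E. Qed.
End P.
Lemma cc (T : topologicalType) (A : set T) : compact A <-> cover_compact A.
Proof.
have [->|/set0P [a Aa]] := eqVneq A set0.
  by split=> _; [move=> I D f _ _; exists fset0 | exact: compact0].
exact: (@cc_aux T a A).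
Qed.

Section Aux.
Variable X : topologicalType.

Lemma hyp_inj : injective (@hyp_set X).
Proof.
move=> [A nA cA] [B nB cB] /= AB; subst B.
by rewrite (Prop_irrelevance nA nB) (Prop_irrelevance cA cB).
Qed.

Lemma op_plus U : open U -> @open (hyperspace X) (@vietoris_sub X (true, U)).
Proof.
move=> oU. rewrite /open /=. exists [set @vietoris_sub X (true, U)].
  move=> _ ->. exact: (@finI_from1 _ _ (@vietoris_index X) (@vietoris_sub X) (true, U) oU).
by rewrite bigcup_set1.
Qed.

Definition sing (x : X) : hyperspace X :=
  @Hyp X [set x] (ex_intro _ x (erefl : [set x] x)) (@compact_set1 X x).

Lemma sing_inj : injective sing.
Proof.
move=> x y /(congr1 (@hyp_set X)) /= E.
have : [set y] x by rewrite -E.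
by [].
Qed.

Lemma sing_cont : continuous sing.
Proof.
move=> x W. rewrite nbhsE => -[B [oB Bx] BW].
move: oB; rewrite /open /= => -[D' sD' BE].
have := Bx; rewrite -BE => -[S DS Sx]; have [J sJ SE] := sD' S DS.
change (S (sing x)) in Sx.
apply: (@filterS _ _ _ (\bigcap_(j in [set` J]) j.2)).
  move=> y Oy; apply: BW; rewrite -BE; exists S => //.
  change (S (sing y)); rewrite -SE => j Jj /=; have := Oy j Jj.
  rewrite /vietoris_sub; case: j.1 => /=.
    by move=> yj z ->.
  by move=> yj; exists y.
apply: filter_bigI => j Jj; apply: open_nbhs_nbhs; split.
  by have := sJ j Jj; move/set_mem.

have := Sx; rewrite -SE => /(_ j Jj) /=; rewrite /vietoris_sub.
case: j.1 => /=.
  by apply.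
by move=> [z [/= -> ]].
Qed.

Lemma finite_powerset (U : set X) : finite_set U ->
  finite_set [set B : set X | B `<=` U].
Proof.
move=> /finite_fsetP [F ->].
apply: (@sub_finite_set _ _ ((fun G : {fset X} => [set` G]) @` [set` fpowerset F])).
  move=> B BF.
  have fB : finite_set B by apply: (sub_finite_set BF); exact: finite_fset.
  exists (fset_set B); last exact: fset_setK.
  rewrite /= fpowersetE; apply/fsubsetP => y.
  by rewrite in_fset_set // => /set_mem /BF.
by apply: finite_image; exact: finite_fset.
Qed.

Lemma union_compact (C : set (hyperspace X)) : compact C ->
  compact (\bigcup_(A in C) (A : set X)).
Proof.
move=> cC; apply/cc => I D f fo Ucov.
have gex : forall A : hyperspace X, exists G : {fset I},
    C A -> {subset G <= D} /\ (A : set X) `<=` cover [set` G] f.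
  move=> A; have [CA|nCA] := pselect (C A); last by exists fset0.
  have := @hyp_compact X A; move/cc => /(_ I D f fo) [].
    by move=> x Ax; apply: Ucov; exists A.
  by move=> G GD AG; exists G.
have [g gP] := choice gex.
move: cC; move/cc =>
  /(_ _ C (fun A => @vietoris_sub X (true, cover [set` g A] f))) [].
- move=> A CA; apply: op_plus; apply: bigcup_open => i gAi.
  apply: fo; apply/set_mem; exact: ((gP A CA).1 i gAi).
- move=> A CA; exists A => //; exact: (gP A CA).2.
move=> E EC Ccov.
have finU : finite_set (\bigcup_(A in [set` E]) [set` g A]).
  by apply: bigcup_finite => [|A _]; exact: finite_fset.
exists (fset_set (\bigcup_(A in [set` E]) [set` g A])).
  move=> i; rewrite in_fset_set // => /set_mem [A EA gAi].
  have CA : C A by apply/set_mem; exact: (EC A EA).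
  exact: (gP A CA).1 i gAi.
move=> x [A CA Ax]; have [B EB BA] := Ccov A CA.
have [i gBi fxi] := BA x Ax.
exists i => //=; rewrite in_fset_set //; by apply/mem_set; exists B.
Qed.

End Aux.

Theorem proposition4p7 (X : topologicalType) (hX : hausdorff_space X) :
  (forall A : set X, compact A -> finite_set A) <->
  (forall C : set (hyperspace X), compact C -> finite_set C).
Proof.
split.
- move=> H C cC.
  have fU := H _ (@union_compact X C cC).
  apply: (@sub_finite_set _ _ ((@hyp_set X) @^-1` [set B : set X | B `<=` \bigcup_(A in C) (A : set X)])).
    by move=> A CA x Ax; exists A.
  apply: finite_preimage; last exact: finite_powerset.
  by move=> a b _ _; exact: hyp_inj.
- move=> H A cA.
  have := H _ (continuous_compact (continuous_subspaceT (@sing_cont X)) cA).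
  move=> fI.
  apply: (@sub_finite_set _ _ ((@sing X) @^-1` ((@sing X) @` A))).
    by move=> x Ax; exists x.
  apply: finite_preimage => //.
  by move=> a b _ _; exact: sing_inj.
Qed.
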